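(* For all integers $d,m>1$ there is an ortholattice identity $\sigma_{d,m}(\bar z,\bar x)$ in the $d+1+m$ variables $\bar z=(z_0,\ldots,z_d)$, $\bar x=(x_1,\ldots,x_m)$ such that for every infinite simple modular ortholattice $L$ of height $d(L)=d$: $\sigma_{d,m}$ fails in $L$, but $\sigma_{d,m}$ is satisfied in $L$ under every assignment which gives the same value to at least two of the variables $x_1,\ldots,x_m$.
   Context: A modular ortholattice (MOL) is a modular lattice with bounds $0,1$ together with an orthocomplementation $x\mapsto x'$ (an order-reversing involution with $x\wedge x'=0$, $x\vee x'=1$). $L$ has height $d(L)=d$ if some (equivalently every) maximal chain in $L$ has $d+1$ elements. Simplicity refers to the ortholattice signature $(\vee,\wedge,{}',0,1)$. An ortholattice identity is an equation between terms in $\vee,\wedge,{}',0,1$. *)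

(* Defs.v *)
From Stdlib Require Import List.
From mathcomp Require Import all_boot.
Set Implicit Arguments. Unset Strict Implicit. Unset Printing Implicit Defensive.

Record MOL := {
  carrier :> Type;
  ojoin : carrier -> carrier -> carrier;
  omeet : carrier -> carrier -> carrier;
  ocompl : carrier -> carrier;
  obot : carrier;
  otop : carrier;
  joinC : forall x y, ojoin x y = ojoin y x;
  meetC : forall x y, omeet x y = omeet y x;
  joinA : forall x y z, ojoin x (ojoin y z) = ojoin (ojoin x y) z;
  meetA : forall x y z, omeet x (omeet y z) = omeet (omeet x y) z;
  joinKmeet : forall x y, ojoin x (omeet x y) = x;
  meetKjoin : forall x y, omeet x (ojoin x y) = x;
  join_bot : forall x, ojoin x obot = x;
  meet_top : forall x, omeet x otop = x;
  complK : forall x, ocompl (ocompl x) = x;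
  compl_antitone : forall x y, omeet x y = x -> omeet (ocompl y) (ocompl x) = ocompl y;
  meet_compl : forall x, omeet x (ocompl x) = obot;
  join_compl : forall x, ojoin x (ocompl x) = otop;
  modular : forall x y z, omeet x z = x ->
     ojoin x (omeet y z) = omeet (ojoin x y) z
}.

Definition ole (L : MOL) (x y : L) : Prop := omeet x y = x.
Definition olt (L : MOL) (x y : L) : Prop := ole x y /\ x <> y.
Definition covers (L : MOL) (x y : L) : Prop :=
  olt x y /\ forall z, ole x z -> ole z y -> z = x \/ z = y.

(** L has height d: some maximal chain has d+1 elements, i.e. there is a chain
    0 = a_0 < a_1 < ... < a_d = 1 in which each a_(i+1) covers a_i
    (such a finite chain of covers from 0 to 1 is exactly a finite maximal chain). *)
Definition has_height (L : MOL) (d : nat) : Prop :=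
  exists a : nat -> L, a 0 = obot L /\ a d = otop L /\
    forall i, i < d -> covers (a i) (a i.+1).

Definition congruence (L : MOL) (R : L -> L -> Prop) : Prop :=
  (forall x, R x x) /\ (forall x y, R x y -> R y x) /\
  (forall x y z, R x y -> R y z -> R x z) /\
  (forall x x' y y', R x x' -> R y y' -> R (ojoin x y) (ojoin x' y')) /\
  (forall x x' y y', R x x' -> R y y' -> R (omeet x y) (omeet x' y')) /\
  (forall x x', R x x' -> R (ocompl x) (ocompl x')).

Definition simple (L : MOL) : Prop :=
  obot L <> otop L /\
  forall R : L -> L -> Prop, congruence R -> (forall x y, R x y -> x = y) \/ (forall x y, R x y).

Definition infinite (L : MOL) : Prop := ~ exists s : list L, forall x : L, In x s.

Inductive term (V : Type) : Type :=
  | tvar : V -> term V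
  | tjoin : term V -> term V -> term V
  | tmeet : term V -> term V -> term V
  | tcompl : term V -> term V
  | tzero : term V
  | tone : term V.

Fixpoint eval (V : Type) (L : MOL) (a : V -> L) (t : term V) : L :=
  match t with
  | tvar v => a v
  | tjoin s u => ojoin (eval a s) (eval a u)
  | tmeet s u => omeet (eval a s) (eval a u)
  | tcompl s => ocompl (eval a s)
  | tzero => obot L
  | tone => otop L
  end.

Definition sat (V : Type) (L : MOL) (a : V -> L) (s t : term V) : Prop :=
  eval a s = eval a t.

(* Main.v *)
Require Import Defs.
From mathcomp Require Import all_boot.
From Stdlib Require Import List Classical.
From mathcomp Require Import zify.

Set Implicit Arguments. Unset Strict Implicit.

Lemma meetI (L : MOL) (x : L) : omeet x x = x.
Proof. have H := meetKjoin x (omeet x x). by rewrite joinKmeet in H. Qed.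

Lemma joinI (L : MOL) (x : L) : ojoin x x = x.
Proof. have H := joinKmeet x (ojoin x x). by rewrite meetKjoin in H. Qed.

Lemma meet0 (L : MOL) (x : L) : omeet (obot L) x = obot L.
Proof. have H := meetKjoin (obot L) x. by rewrite joinC join_bot in H. Qed.

Lemma ole_join (L : MOL) (x y : L) : ole x y <-> ojoin x y = y.
Proof.
split => H.
- rewrite -H joinC meetC. by rewrite joinKmeet.
- rewrite /ole -H. exact: meetKjoin.
Qed.

Lemma ole_refl (L : MOL) (x : L) : ole x x.
Proof. exact: meetI. Qed.

Lemma ole_trans (L : MOL) (x y z : L) : ole x y -> ole y z -> ole x z.
Proof. rewrite /ole => H1 H2. by rewrite -H1 -meetA H2. Qed.

Lemma ole_anti (L : MOL) (x y : L) : ole x y -> ole y x -> x = y.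
Proof. rewrite /ole => H1 H2. by rewrite -H1 meetC H2. Qed.

Lemma meet_lb_l (L : MOL) (x y : L) : ole (omeet x y) x.
Proof. by rewrite /ole meetC meetA meetI. Qed.

Lemma meet_lb_r (L : MOL) (x y : L) : ole (omeet x y) y.
Proof. by rewrite /ole -meetA meetI. Qed.

Lemma meet_glb (L : MOL) (x y z : L) : ole z x -> ole z y -> ole z (omeet x y).
Proof. rewrite /ole => H1 H2. by rewrite meetA H1 H2. Qed.

Lemma join_ub_l (L : MOL) (x y : L) : ole x (ojoin x y).
Proof. exact: meetKjoin. Qed.

Lemma join_ub_r (L : MOL) (x y : L) : ole y (ojoin x y).
Proof. rewrite joinC. exact: meetKjoin. Qed.

Lemma join_lub (L : MOL) (x y z : L) : ole x z -> ole y z -> ole (ojoin x y) z.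
Proof.
move=> /ole_join H1 /ole_join H2. apply/ole_join. by rewrite -joinA H2 H1.
Qed.

Lemma ole_top (L : MOL) (x : L) : ole x (otop L).
Proof. exact: meet_top. Qed.

Definition fin (L : MOL) (P : L -> Prop) := exists s : list L, forall x, P x -> In x s.

Lemma fin_sub (L : MOL) (P Q : L -> Prop) : (forall x, P x -> Q x) -> fin Q -> fin P.
Proof. move=> H [s Hs]. exists s => x /H. exact: Hs. Qed.

Lemma fin_union (L : MOL) (P Q : L -> Prop) : fin P -> fin Q -> fin (fun x => P x \/ Q x).
Proof.
move=> [s Hs] [t Ht]. exists (app s t) => x [/Hs|/Ht] H; apply: in_or_app; tauto.
Qed.

Lemma fin_bigunion (L : MOL) (P : L -> Prop) (Q : L -> L -> Prop) :
  fin P -> (forall e, P e -> fin (Q e)) -> fin (fun x => exists e, P e /\ Q e x).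
Proof.
move=> [s Hs] HQ.
suff: fin (fun x => exists e, In e s /\ P e /\ Q e x).
  apply: fin_sub => x [e [He1 He2]]. exists e. split => //. exact: Hs.
elim: s {Hs} => [|e s [t Ht]].
  exists nil => x [e [[] _]].
case: (classic (P e)) => Pe.
- have [u Hu] := HQ e Pe. exists (app u t) => x [e' [[<-|Hin] [Pe' Qe']]]; apply: in_or_app.
  + left; exact: Hu.
  + right; apply: Ht; exists e'; tauto.
- exists t => x [e' [[<-|Hin] [Pe' Qe']]] //. apply: Ht; exists e'; tauto.
Qed.

Lemma pigeon (L : MOL) (n : nat) (P : L -> Prop) :
  (forall f : nat -> L, (forall i, i < n -> P (f i)) ->
     exists i j, i < n /\ j < n /\ i <> j /\ f i = f j) -> fin P.
Proof.
elim: n P => [|n IH] P H.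
  have [i [j [Hi _]]] := H (fun _ => obot L) (fun i (Hi : i < 0) => ltac:(lia)). lia.
case: (classic (exists p, P p)) => [[p Pp]|NP]; last first.
  exists nil => x Px; apply: NP; by exists x.
have [s Hs] : fin (fun x => P x /\ x <> p).
  apply: IH => f Hf.
  have Hg : forall i, i < n.+1 -> P (if i == n then p else f i).
    move=> i Hi. case: eqP => Ein; first exact Pp. apply: (proj1 (Hf i _)); lia.
  have [i [j [Hi [Hj [Hij Heq]]]]] := H (fun i => if i == n then p else f i) Hg.
  move: Heq. case: eqP => Ein; case: eqP => Ejn => Heq.
  - lia.
  - have := proj2 (Hf j ltac:(lia)). by rewrite Heq.
  - have := proj2 (Hf i ltac:(lia)). by rewrite Heq.
  - exists i, j. repeat split => //; lia.
exists (p :: s) => x Px. case: (classic (x = p)) => [->|Hx]; first by left.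
right; exact: Hs.
Qed.

Section Geo.
Variable L : MOL.
Variables c b : L.
Hypothesis cov : covers c b.
Variable e : L.
Definition Xe (x : L) := ole x b /\ ~ ole x c /\ omeet x c = e.

Lemma cb : ole c b. Proof. by case: cov => [[]]. Qed.

Lemma K1 x : ole x b -> ~ ole x c -> ojoin c x = b.
Proof.
move=> Hxb Hxc. case: cov => _ Hc.
case: (Hc (ojoin c x) (join_ub_l _ _) (join_lub cb Hxb)) => // Heq.
exfalso; apply: Hxc. rewrite -Heq. exact: join_ub_r.
Qed.

Lemma e_le x : Xe x -> ole e x /\ ole e c.
Proof. move=> [_ [_ <-]]. split; [exact: meet_lb_l|exact: meet_lb_r]. Qed.

Lemma K2 x w : Xe x -> ole e w -> ole w x -> w = e \/ w = x.
Proof.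
move=> [Hxb [Hxc Hxe]] Hew Hwx.
have Hm := modular c Hwx.
rewrite meetC Hxe in Hm.
have Hj : ojoin w e = w by rewrite joinC; apply/ole_join.
rewrite Hj in Hm.
case: cov => _ Hc.
case: (Hc (ojoin w c) (join_ub_r _ _) (join_lub (ole_trans Hwx Hxb) cb)) => Heq;
  rewrite Heq in Hm.
- left. by rewrite Hm meetC.
- right. rewrite Hm. rewrite meetC. exact: Hxb.
Qed.

Lemma K3 y y' : Xe y -> Xe y' -> y <> y' -> omeet y y' = e.
Proof.
move=> Hy Hy' Hne.
have [ey ec] := e_le Hy. have [ey' _] := e_le Hy'.
case: (K2 Hy (meet_glb ey ey') (meet_lb_l _ _)) => // Heq.
have Hyy' : ole y y' by rewrite -Heq; exact: meet_lb_r.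
case: (K2 Hy' ey Hyy') => // Hye.
exfalso. case: Hy => _ [Hyc _]. apply: Hyc. by rewrite Hye.
Qed.

Lemma K4 x0 y w : Xe x0 -> Xe y -> ole y w -> ole w (ojoin x0 y) ->
  w = y \/ w = ojoin x0 y.
Proof.
move=> Hx0 Hy Hyw Hwl.
have Hm := modular x0 Hyw.
have Hl : omeet (ojoin y x0) w = w by rewrite joinC meetC; exact: Hwl.
rewrite Hl in Hm.
have [ey _] := e_le Hy. have [ex0 _] := e_le Hx0.
case: (K2 Hx0 (meet_glb ex0 (ole_trans ey Hyw)) (meet_lb_l _ _)) => Heq;
  rewrite Heq in Hm.
- left. rewrite -Hm joinC. by apply/ole_join.
- right. by rewrite -Hm joinC.
Qed.

Lemma K5 x0 y : Xe x0 -> ole (ojoin x0 y) b ->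
  ojoin x0 (omeet (ojoin x0 y) c) = ojoin x0 y.
Proof.
move=> [Hxb [Hxc _]] Hl.
rewrite meetC (modular c (join_ub_l x0 y)) joinC (K1 Hxb Hxc) meetC. exact: Hl.
Qed.

Lemma Zpair x0 r y y' : Xe x0 ->
  let Z := fun y => Xe y /\ (y = x0 \/ omeet (ojoin x0 y) c = r) in
  Z y -> Z y' -> y <> y' -> ojoin y y' = ojoin x0 r /\ omeet y y' = e.
Proof.
move=> Hx0 Z [Hy Ey] [Hy' Ey'] Hne. split; last exact: K3.
have jz : forall z, Xe z -> (z = x0 \/ omeet (ojoin x0 z) c = r) -> z <> x0 ->
    ojoin x0 z = ojoin x0 r.
  move=> z Hz [//|<-] _. symmetry. apply: K5 => //.
  apply: join_lub; [exact: (proj1 Hx0)|exact: (proj1 Hz)].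
case: (classic (y = x0)) => [Eyx|Nyx].
  subst y. apply: jz => //. by move=> E; apply: Hne.
case: (classic (y' = x0)) => [Eyx'|Nyx'].
  subst y'. rewrite joinC. exact: jz.
rewrite -(jz y Hy Ey Nyx).
have Hw : ole (ojoin y y') (ojoin x0 y).
  apply: join_lub; first exact: join_ub_r.
  rewrite (jz y Hy Ey Nyx) -(jz y' Hy' Ey' Nyx'). exact: join_ub_r.
case: (K4 Hx0 Hy (join_ub_l y y') Hw) => // Heq.
exfalso.
have Hy'y : ole y' y by rewrite -Heq; exact: join_ub_r.
have Hm := K3 Hy Hy' Hne. rewrite meetC in Hm.
rewrite Hy'y in Hm. case: Hy' => _ [Hc _]. apply: Hc. rewrite Hm.
exact: (proj2 (e_le Hy)).
Qed.

End Geo.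

Definition nofan (L : MOL) (m : nat) :=
  forall (e l : L) (P : L -> Prop), e <> l ->
  (forall y y', P y -> P y' -> y <> y' -> ojoin y y' = l /\ omeet y y' = e) -> fin P.

Lemma Xe_fin (L : MOL) m (c b e : L) : covers c b -> nofan L m -> fin (fun x => ole x c) ->
  fin (Xe c b e).
Proof.
move=> cov NF Fc.
case: (classic (exists x0, Xe c b e x0)) => [[x0 Hx0]|NX]; last first.
  exists nil => x Hx; apply: NX; by exists x.
pose Z r := fun y => Xe c b e y /\ (y = x0 \/ omeet (ojoin x0 y) c = r).
have FZ : forall r, ole r c -> fin (Z r).
  move=> r _. apply: (NF e (ojoin x0 r)).
  - move=> E. case: (Hx0) => _ [Hc _]. apply: Hc.
    apply: (ole_trans (join_ub_l x0 r)). rewrite -E.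
    exact: (proj2 (e_le Hx0)).
  - move=> y y' Hy Hy' Hne. exact: (Zpair cov Hx0 Hy Hy' Hne).
apply: (fin_sub _ (fin_bigunion Fc FZ)).
move=> y Hy. case: (classic (y = x0)) => [->|Ne].
- exists c. split; first exact: ole_refl. split => //; by left.
- exists (omeet (ojoin x0 y) c). split; first exact: meet_lb_r.
  split => //; by right.
Qed.

Lemma step_fin (L : MOL) m (c b : L) : covers c b -> nofan L m -> fin (fun x => ole x c) ->
  fin (fun x => ole x b).
Proof.
move=> cov NF Fc.
have FX := fin_bigunion Fc (fun e _ => Xe_fin e cov NF Fc).
apply: (fin_sub _ (fin_union Fc FX)) => x Hxb.
case: (classic (ole x c)) => Hxc; first by left.
right. exists (omeet x c). split; first exact: meet_lb_r.
by repeat split.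
Qed.

Lemma all_fin (L : MOL) m d : has_height L d -> nofan L m -> fin (fun x : L => True).
Proof.
move=> [a [Ha0 [Had Hcov]]] NF.
have H : forall k, k <= d -> fin (fun x => ole x (a k)).
  elim => [_|k IH Hk].
  - exists (obot L :: nil) => x. rewrite Ha0 /ole meetC meet0 => <-. by left.
  - apply: (step_fin (Hcov k _) NF (IH _)); lia.
apply: (fin_sub _ (H d (leqnn d))) => x _. rewrite Had. exact: ole_top.
Qed.

Definition gterm d m (i j : 'I_m) : term ('I_d.+1 + 'I_m) :=
  tmeet (tjoin (tvar (inr i)) (tvar (inr j))) (tcompl (tmeet (tvar (inr i)) (tvar (inr j)))).
Definition hterm d m (p : 'I_m * 'I_m) : term ('I_d.+1 + 'I_m) :=
  if p.1 == p.2 then tone _ else gterm d p.1 p.2.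
Definition bigT d m (l : list ('I_m * 'I_m)%type) : term ('I_d.+1 + 'I_m) :=
  foldr (fun p acc => tmeet (hterm d p) acc) (tone _) l.

Lemma bigT_zero d m (L : MOL) (a : 'I_d.+1 + 'I_m -> L) l p :
  p \in l -> eval a (hterm d p) = obot L -> eval a (bigT d l) = obot L.
Proof.
elim: l => [//|q l IH]. rewrite inE => /orP [/eqP <-|Hin] H /=.
- by rewrite H meet0.
- by rewrite IH // meetC meet0.
Qed.

Lemma bigT_two d m (L : MOL) (a : 'I_d.+1 + 'I_m -> L) l w :
  (forall p, eval a (hterm d p) = otop L \/ eval a (hterm d p) = w) ->
  eval a (bigT d l) = otop L \/ eval a (bigT d l) = w.
Proof.
move=> H. elim: l => [|q l IH] /=; first by left.
case: (H q) => ->; case: IH => ->.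
- left; exact: meet_top.
- right; by rewrite meetC meet_top.
- right; exact: meet_top.
- right; exact: meetI.
Qed.

Theorem mainTheorem5 :
  forall d m : nat, 1 < d -> 1 < m ->
  exists s t : term ('I_d.+1 + 'I_m),
    forall L : MOL, infinite L -> simple L -> has_height L d ->
      (exists a : 'I_d.+1 + 'I_m -> L, ~ sat a s t) /\
      (forall a : 'I_d.+1 + 'I_m -> L,
         (exists i j : 'I_m, i <> j /\ a (inr i) = a (inr j)) -> sat a s t).
Proof.
move=> d m Hd Hm.
exists (bigT d (enum {: 'I_m * 'I_m})), (tzero _).
move=> L Hinf _ Hh. split; last first.
  move=> a [i [j [Hij Ha]]]. rewrite /sat /=.
  apply: (@bigT_zero d m L a _ (i, j)); first by rewrite mem_enum.
  rewrite /hterm /=. case: eqP => // _. rewrite /= Ha joinI meetI.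
  exact: meet_compl.
case: (classic (exists (e l : L) (f : nat -> L), e <> l /\
   forall i j, i < m -> j < m -> i <> j ->
     f i <> f j /\ ojoin (f i) (f j) = l /\ omeet (f i) (f j) = e)) => [Hfan|Hnf];
  last first.
  exfalso. apply: Hinf.
  have NF : nofan L m.
    move=> e l P Hel HP. apply: (pigeon (n := m)) => f Hf.
    apply: NNPP => Hn. apply: Hnf. exists e, l, f. split => // i j Hi Hj Hij.
    have Hne : f i <> f j by move=> E; apply: Hn; exists i, j.
    split => //. exact: HP (Hf i Hi) (Hf j Hj) Hne.
  have [s Hs] := all_fin Hh NF. exists s => x. exact: Hs.
case: Hfan => e [l [f [Hel Hf]]].
exists (fun v => match v with inl _ => obot L | inr i => f (nat_of_ord i) end).
rewrite /sat /=.
have [_ [Hj Hmt]] := Hf 0 1 ltac:(lia) ltac:(lia) ltac:(lia).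
have Hel' : ole e l.
  rewrite -Hmt -Hj. apply: ole_trans (meet_lb_l _ _) (join_ub_l _ _).
pose w := omeet l (ocompl e).
have Hw : w <> obot L.
  move=> E. apply: Hel.
  have := modular (ocompl e) Hel'. rewrite join_compl (meetC (otop L)) meet_top.
  rewrite (meetC (ocompl e) l) -/w E join_bot => ->. done.
have Htop : otop L <> obot L.
  move=> E. apply: Hw. by rewrite -[w]meet_top E meetC meet0.
have := @bigT_two d m L
  (fun v => match v with inl _ => obot L | inr i => f (nat_of_ord i) end)
  (enum {: 'I_m * 'I_m}) w.
case.
- move=> [i j]. rewrite /hterm /=. case: eqP => Eij; first by left.
  right. have Ne : nat_of_ord i <> nat_of_ord j.
    move=> E; apply: Eij; exact: ord_inj.
  have [_ [E1 E2]] := Hf i j (ltn_ord i) (ltn_ord j) Ne. rewrite /gterm /=. by rewrite E1 E2.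
- by move=> ->.
- by move=> ->.
Qed.
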